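(* Let $T^+=\mathbb{Z}^+$ or $\mathbb{R}^+$ act on a compact metrizable space $X$ by continuous surjections $\alpha^t$. Then the adherence semigroup $\mathcal A^+$ contains the kernel $\mathcal M^+$ of $E^+$.
   Context: $\alpha^{s+t}=\alpha^s\circ\alpha^t$, $\alpha^0=\mathrm{id}$. $E^+=E(X,T^+)$ is the closure of $\{\alpha^t:t\in T^+\}$ in $X^X$ (pointwise convergence topology, composition); its kernel $\mathcal M^+$ is its unique minimal two-sided ideal. $\mathcal A^+$ is the set of elements of $E^+$ that are pointwise limits of nets $(\alpha^{t_\nu})$ with $\lim t_\nu=+\infty$ (equivalently $\bigcap_{t\in T^+}\alpha^tE^+$). *)

(* Defs.v *)
From HB Require Import structures.
From mathcomp Require Import all_boot all_order all_algebra.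
From mathcomp Require Import all_classical all_reals all_analysis.
Set Implicit Arguments. Unset Strict Implicit. Unset Printing Implicit Defensive.
Import Order.TTheory GRing.Theory Num.Theory.
Local Open Scope classical_set_scope.

Definition is_cont_surj_action {T : Type} (add : T -> T -> T) (zero : T)
    (S : set T) {X : topologicalType} (alpha : T -> X -> X) : Prop :=
  [/\ alpha zero = id,
      (forall s t, S s -> S t -> alpha (add s t) = alpha s \o alpha t),
      (forall t, S t -> continuous (alpha t)) &
      (forall t, S t -> forall y, exists x, alpha t x = y)].

Definition enveloping {T : Type} (S : set T) {X : topologicalType}
    (alpha : T -> X -> X) : set (X -> X) :=
  closure ((alpha @` S) : set {ptws X -> X}).

Definition two_sided_ideal {X : Type} (E I : set (X -> X)) : Prop :=
  [/\ I !=set0, I `<=` E,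
      (forall f g, E f -> I g -> I (f \o g)) &
      (forall f g, I f -> E g -> I (f \o g))].

Definition minimal_ideal {X : Type} (E M : set (X -> X)) : Prop :=
  two_sided_ideal E M /\
  (forall I, two_sided_ideal E I -> I `<=` M -> I = M).

(* Adherence semigroup A^+ = \bigcap_{t in S} alpha^t E^+. *)
Definition adherence {T : Type} (S : set T) {X : topologicalType}
    (alpha : T -> X -> X) : set (X -> X) :=
  [set f | forall t, S t -> exists2 g, enveloping S alpha g & f = alpha t \o g].

(* Main.v *)
Require Import Defs.
From HB Require Import structures.
From mathcomp Require Import all_boot all_order all_algebra.
From mathcomp Require Import all_classical all_reals all_analysis.
Import Order.TTheory GRing.Theory Num.Theory.
Local Open Scope classical_set_scope.
Local Open Scope ring_scope.

Lemma env_central {T : Type} (add : T -> T -> T) (S : set T)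
  {X : topologicalType} (hX : hausdorff_space X) (alpha : T -> X -> X)
  (addC : forall s t, add s t = add t s)
  (hadd : forall s t, S s -> S t -> alpha (add s t) = alpha s \o alpha t)
  (hc : forall t, S t -> continuous (alpha t)) t (St : S t) f :
  enveloping S alpha f -> f \o alpha t = alpha t \o f.
Proof.
move=> Ef; apply: funext => x /=.
apply: hX => A B nA nB.
have nA' : nbhs (f : {ptws X -> X}) [set g : {ptws X -> X} | A (g (alpha t x))].
  exact: (@proj_continuous X (fun _ => X) (alpha t x) f A nA).
have nB' : nbhs (f : {ptws X -> X}) [set g : {ptws X -> X} | B (alpha t (g x))].
  have := hc t St (f x) B nB.
  exact: (@proj_continuous X (fun _ => X) x f (alpha t @^-1` B)).
have [g [[s Ss <-] [Ag Bg]]] := Ef _ (filterI nA' nB').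
exists (alpha s (alpha t x)); split => //.
rewrite -[alpha s (alpha t x)]/((alpha s \o alpha t) x) -hadd // addC hadd //.
Qed.

Lemma generic_main {T : Type} (add : T -> T -> T) (zero : T) (S : set T)
  {X : topologicalType} (hX : hausdorff_space X) (alpha : T -> X -> X)
  (addC : forall s t, add s t = add t s) :
  is_cont_surj_action add zero S alpha ->
  forall M, minimal_ideal (enveloping S alpha) M -> M `<=` adherence S alpha.
Proof.
case=> _ hadd hc _ M [[M0 ME ML MR] Mmin] f Mf t St.
have At : enveloping S alpha (alpha t).
  by apply: subset_closure; exists t.
pose I := [set h | exists2 m, M m & h = alpha t \o m].
have II : two_sided_ideal (enveloping S alpha) I.
  split.
  - by case: M0 => m Mm; exists (alpha t \o m); exists m.
  - by move=> h [m Mm ->]; apply: ME; apply: ML.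
  - move=> g h Eg [m Mm ->]; exists (g \o m); first exact: ML.
    by rewrite compA (@env_central _ add S X hX alpha addC hadd hc t St g Eg).
  - move=> h g [m Mm ->] Eg; exists (m \o g) => //; exact: MR.
have IM : I `<=` M by move=> h [m Mm ->]; apply: ML.
have EI := Mmin I II IM.
rewrite -EI in Mf; case: Mf => m Mm ->.
by exists m => //; exact: ME.
Qed.

Theorem lemma4p3 (R : realType) (X : pseudoMetricType R)
    (hX : hausdorff_space X) (cX : compact [set: X]) :
  (* case T^+ = Z^+ *)
  (forall alpha : nat -> X -> X,
     is_cont_surj_action addn 0%N [set: nat] alpha ->
     forall M, minimal_ideal (enveloping [set: nat] alpha) M ->
       M `<=` adherence [set: nat] alpha) /\
  (* case T^+ = R^+ *)
  (forall alpha : R -> X -> X,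
     is_cont_surj_action +%R 0 [set t : R | 0 <= t] alpha ->
     forall M, minimal_ideal (enveloping [set t : R | 0 <= t] alpha) M ->
       M `<=` adherence [set t : R | 0 <= t] alpha).
Proof.
split => alpha.
- exact: (@generic_main nat addn 0%N setT X hX alpha addnC).
- exact: (@generic_main R +%R 0 [set t : R | 0 <= t] X hX alpha (@addrC R)).
Qed.
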